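(* Let $V=W\times D$ be a direct product of finite-dimensional real vector spaces, let $\theta$ be the pullback to $V$ of a volume form in $W$ and $\zeta$ the pullback to $V$ of an indivisible exterior form in $D$. Then the divisibility space of the exterior $p$-form $\mu=\theta\wedge\zeta$ is $\{0\}\times D$.
   Context: A volume form in a vector space is a nonzero form of top degree (a nonzero scalar if the dimension is $0$). The divisibility space of an exterior form $\mu$ in $V$ is the common kernel of all $1$-forms $\xi\in V^*$ with $\xi\wedge\mu=0$ (for a nonzero $0$-form it is $V$). An exterior form in $D$ is indivisible if its divisibility space is all of $D$, i.e. $\xi\wedge\zeta\neq0$ for all nonzero $\xi\in D^*$. *)

(* Defs.v *)
From HB Require Import structures.
From mathcomp Require Import all_boot all_order all_algebra.
From mathcomp Require Import perm.
Set Implicit Arguments. Unset Strict Implicit. Unset Printing Implicit Defensive.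
Import GRing.Theory.
Local Open Scope ring_scope.

(* An exterior k-form on V is represented by its action on k-tuples of
   vectors: a multilinear alternating map ('I_k -> V) -> R. *)
Definition xform (R : Type) (V : Type) (k : nat) := ('I_k -> V) -> R.

Definition upd (V : Type) (k : nat) (x : 'I_k -> V) (i : 'I_k) (v : V) : 'I_k -> V :=
  fun j => if j == i then v else x j.

Definition multilinear (R : nzRingType) (V : lmodType R) (k : nat) (f : xform R V k) :=
  forall (x : 'I_k -> V) (i : 'I_k) (a : R) (u w : V),
    f (upd x i (a *: u + w)) = a * f (upd x i u) + f (upd x i w).

Definition alternating (R : nzRingType) (V : Type) (k : nat) (f : xform R V k) :=
  forall (x : 'I_k -> V) (i j : 'I_k), i != j -> x i = x j -> f x = 0.

Definition is_form (R : nzRingType) (V : lmodType R) (k : nat) (f : xform R V k) :=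
  multilinear f /\ alternating f.

Definition form_zero (R : nzRingType) (V : Type) (k : nat) (f : xform R V k) :=
  forall x, f x = 0.

(* wedge product (alternation convention with 1/(p! q!)) *)
Definition wedge (R : fieldType) (V : Type) (p q : nat)
    (a : xform R V p) (b : xform R V q) : xform R V (p + q) :=
  fun x => ((p`!)%:R)^-1 * ((q`!)%:R)^-1 *
    \sum_(s : 'S_(p + q))
      (-1) ^+ (odd_perm s) * a (fun i => x (s (lshift q i)))
                             * b (fun j => x (s (rshift p j))).

Definition pullback (R : Type) (A B : Type) (k : nat) (f : A -> B) (a : xform R B k)
  : xform R A k := fun x => a (fun i => f (x i)).

Definition eval1 (R : Type) (V : Type) (xi : xform R V 1) (v : V) : R :=
  xi (fun _ => v).

Definition divspace (R : fieldType) (V : lmodType R) (k : nat) (mu : xform R V k)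
  : V -> Prop :=
  fun v => forall xi : xform R V 1, is_form xi -> form_zero (wedge xi mu) ->
             eval1 xi v = 0.

Definition volume_form (R : fieldType) (W : vectType R) (omega : xform R W (\dim {:W}%VS)) :=
  is_form omega /\ ~ form_zero omega.

Definition indivisible (R : fieldType) (D : lmodType R) (k : nat) (zeta : xform R D k) :=
  forall v : D, divspace zeta v.

(* Main.v *)
Require Import Defs.
From HB Require Import structures.
From mathcomp Require Import all_boot all_order all_algebra.
From mathcomp Require Import perm.
From Stdlib Require Import Classical FunctionalExtensionality.
From mathcomp Require Import ring zify.
Set Implicit Arguments. Unset Strict Implicit. Unset Printing Implicit Defensive.
Import Order.TTheory GRing.Theory Num.Theory.
Local Open Scope ring_scope.

Lemma upd_id (V : Type) k (x : 'I_k -> V) i : upd x i (x i) = x.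
Proof. by apply: functional_extensionality => j; rewrite /upd; case: eqP => // ->. Qed.

Lemma upd_comm (V : Type) k (x : 'I_k -> V) i j u w : i != j ->
  upd (upd x i u) j w = upd (upd x j w) i u.
Proof.
move=> ij; apply: functional_extensionality => l; rewrite /upd.
have [->|lj] := eqVneq l j; have [E|li] := eqVneq l i => //;
by rewrite eq_sym (negbTE ij).
Qed.

Lemma upd_upd (V : Type) k (x : 'I_k -> V) i u w : upd (upd x i u) i w = upd x i w.
Proof. by apply: functional_extensionality => l; rewrite /upd; case: eqP. Qed.

Lemma upd2_i (V : Type) k (x : 'I_k -> V) i j a b : i != j -> upd (upd x i a) j b i = a.
Proof. by move=> ij; rewrite /upd eqxx; case: eqP => // E; rewrite E eqxx in ij. Qed.

Lemma upd2_j (V : Type) k (x : 'I_k -> V) i j a b : upd (upd x i a) j b j = b.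
Proof. by rewrite /upd eqxx. Qed.

Lemma ml_add (R : nzRingType) (V : lmodType R) k (f : xform R V k) :
  multilinear f -> forall x i u w, f (upd x i (u + w)) = f (upd x i u) + f (upd x i w).
Proof. by move=> H x i u w; rewrite -[u]scale1r H mul1r scale1r. Qed.

Lemma ml_zero (R : nzRingType) (V : lmodType R) k (f : xform R V k) :
  multilinear f -> forall x i, f (upd x i 0) = 0.
Proof.
move=> H x i; apply: (@addrI _ (f (upd x i 0))).
by rewrite addr0 -(ml_add H) addr0.
Qed.

Lemma ml_scale (R : nzRingType) (V : lmodType R) k (f : xform R V k) :
  multilinear f -> forall x i a u, f (upd x i (a *: u)) = a * f (upd x i u).
Proof. by move=> H x i a u; rewrite -[a *: u]addr0 H ml_zero // addr0. Qed.

Lemma ml_sum (R : nzRingType) (V : lmodType R) k (f : xform R V k) (I : finType)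
  (c : I -> R) (v : I -> V) :
  multilinear f -> forall x i,
  f (upd x i (\sum_j c j *: v j)) = \sum_j c j * f (upd x i (v j)).
Proof.
move=> H x i; apply: (big_rec2 (fun y1 y2 => f (upd x i y1) = y2)).
  exact: ml_zero.
by move=> j y1 y2 _ <-; rewrite H.
Qed.

Lemma alt_tperm (R : nzRingType) (V : lmodType R) k (f : xform R V k) :
  multilinear f -> alternating f -> forall (x : 'I_k -> V) i j, i != j ->
  f (fun l => x (tperm i j l)) = - f x.
Proof.
move=> Hm Ha x i j ij.
set u := x i; set w := x j.
have H0 : f (upd (upd x i (u + w)) j (u + w)) = 0.
  by apply: (Ha _ i j ij); rewrite upd2_i // upd2_j.
have E1 : forall a b, f (upd (upd x i a) j b) = f (upd (upd x j b) i a).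
  by move=> a b; rewrite upd_comm.
rewrite (ml_add Hm) !E1 !(ml_add Hm) -!E1 in H0.
have Z1 : f (upd (upd x i u) j u) = 0.
  by apply: (Ha _ i j ij); rewrite upd2_i // upd2_j.
have Z2 : f (upd (upd x i w) j w) = 0.
  by apply: (Ha _ i j ij); rewrite upd2_i // upd2_j.
have X1 : upd (upd x i u) j w = x.
  by rewrite /u /w upd_id upd_id.
have X2 : upd (upd x i w) j u = (fun l => x (tperm i j l)).
  apply: functional_extensionality => l; rewrite /upd.
  case: (tpermP i j l) => [->|->|/eqP li /eqP lj]; rewrite ?eqxx //.
  - by case: eqP => // E; rewrite E eqxx in ij.
  - by rewrite (negbTE li) (negbTE lj).
rewrite Z1 Z2 X1 X2 add0r addr0 in H0.
apply/eqP; rewrite -addr_eq0; apply/eqP; exact: H0.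
Qed.

Lemma invn_mulrn (R : numFieldType) (c : R) n : (0 < n)%N -> (n%:R)^-1 * (c *+ n) = c.
Proof. by move=> n0; rewrite -[c *+ n]mulr_natl mulKf // pnatr_eq0 -lt0n n0. Qed.

Lemma alt_perm (R : nzRingType) (V : lmodType R) k (f : xform R V k) :
  multilinear f -> alternating f -> forall (x : 'I_k -> V) (s : 'S_k),
  f (fun l => x (s l)) = (-1) ^+ (odd_perm s) * f x.
Proof.
move=> Hm Ha x s; case: (prod_tpermP s) => ts -> {s}.
elim: ts x => [|t ts IH] x /=.
  move=> _; rewrite big_nil odd_perm1 expr0 mul1r; congr f.
  by apply: functional_extensionality => l; rewrite perm1.
move=> /andP[dt dts]; rewrite big_cons.
have E := alt_tperm Hm Ha (fun m => x ((\prod_(t <- ts) tperm t.1 t.2)%g m)) dt.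
rewrite /= in E.
have -> : (fun l => x ((tperm t.1 t.2 * \prod_(t <- ts) tperm t.1 t.2)%g l)) =
          (fun l => x ((\prod_(t <- ts) tperm t.1 t.2)%g (tperm t.1 t.2 l))).
  by apply: functional_extensionality => l; rewrite permM.
rewrite E IH // odd_permM odd_tperm dt signr_addb expr1.
by rewrite mulN1r mulNr.
Qed.

Lemma wedge1E (R : numFieldType) (V : lmodType R) k (xi : xform R V 1)
  (M : xform R V k) : multilinear M -> alternating M -> forall x : 'I_(1 + k) -> V,
  wedge xi M x = \sum_(i < k.+1) (-1) ^+ i * xi (fun _ => x i) * M (fun j => x (lift i j)).
Proof.
move=> Hm Ha x; rewrite /wedge.
rewrite (partition_big (fun s : 'S_(k.+1) => s ord0) predT) //=.
rewrite mulr_sumr; apply: eq_bigr => j _.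
rewrite (reindex (lift_perm ord0 j)); last first.
  pose ulsf i (s : 'S_k.+1) m := odflt m (unlift (s i) (s (lift i m))).
  have ulsfK i (s : 'S_k.+1) m: lift (s i) (ulsf i s m) = s (lift i m).
    rewrite /ulsf; have:= neq_lift i m.
    by rewrite -(can_eq (permK s)) => /unlift_some[] ? ? ->.
  have inj_ulsf: injective (ulsf ord0 _).
    move=> s; apply: can_inj (ulsf (s ord0) s^-1%g) _ => m'.
    by rewrite {1}/ulsf ulsfK !permK liftK.
  exists (fun s => perm (inj_ulsf s)) => [s _ | s].
    by apply/permP=> m'; rewrite permE /ulsf lift_perm_lift lift_perm_id liftK.
  move/(s _ =P _) => si0; apply/permP=> m.
  case: (unliftP ord0 m) => [m'|] ->; rewrite ?lift_perm_id //.
  by rewrite lift_perm_lift -si0 permE ulsfK.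
rewrite (eq_bigl predT); last by move=> t; rewrite /= lift_perm_id eqxx.
have E : forall t : 'S_k, (-1) ^+ odd_perm (lift_perm ord0 j t) *
     xi (fun i => x (lift_perm ord0 j t (lshift k i))) *
     M (fun m => x (lift_perm ord0 j t (rshift 1 m))) =
     (-1) ^+ j * xi (fun _ => x j) * M (fun m => x (lift j m)).
  move=> t.
  have -> : (fun i : 'I_1 => x (lift_perm ord0 j t (lshift k i))) = (fun _ => x j).
    apply: functional_extensionality => i.
    have -> : lshift k i = ord0 :> 'I_k.+1 by apply: val_inj; rewrite /= (ord1 i).
    by rewrite lift_perm_id.
  have -> : (fun m => x (lift_perm ord0 j t (rshift 1 m))) =
            (fun m => (fun m' => x (lift j m')) (t m)).
    apply: functional_extensionality => m.
    have -> : rshift 1 m = lift ord0 m :> 'I_k.+1 by apply: val_inj.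
    by rewrite lift_perm_lift.
  rewrite (alt_perm Hm Ha (fun m' => x (lift j m'))) odd_lift_perm.
  rewrite (_ : odd (@ord0 k) = false) // addFb signr_addb signr_odd.
  case: (odd_perm t); rewrite ?expr0 ?expr1 ?mulr1 ?mul1r //.
  by rewrite !mulrN1 !mulN1r !mulNr mulrN opprK.
rewrite (eq_bigr _ (fun t _ => E t)) sumr_const card_Sn (_ : 1`! = 1)// invr1 mul1r.
by rewrite invn_mulrn // fact_gt0.
Qed.

Lemma wedge_alt (R : numFieldType) (V : Type) p q (a : xform R V p)
  (b : xform R V q) : alternating (wedge a b).
Proof.
move=> x i j ij xij; rewrite /wedge.
set S := \sum_(s : 'S_(p + q)) _.
suff -> : S = 0 by rewrite mulr0.
have xt : forall m, x (tperm i j m) = x m.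
  by move=> m; case: (tpermP i j m) => [->|->|] //; rewrite xij.
have E : S = - S.
  rewrite {1}/S (reindex_inj (mulIg (tperm i j))) /S -sumrN.
  apply: eq_bigr => s _.
  rewrite odd_permM odd_tperm ij signr_addb expr1 mulrN1 !mulNr; congr (- (_ * _ * _)).
    by congr a; apply: functional_extensionality => l; rewrite permM xt.
  by congr b; apply: functional_extensionality => l; rewrite permM xt.
have : S *+ 2 = 0 by rewrite mulr2n {1}E addNr.
by move/eqP; rewrite mulrn_eq0 /= => /eqP.
Qed.

Lemma mul3_lin (R : comPzRingType) (S A1 A2 B c : R) :
  S * (c * A1 + A2) * B = c * (S * A1 * B) + S * A2 * B.
Proof. by rewrite mulrDr mulrDl mulrCA !mulrA. Qed.

Lemma mul3_lin' (R : comPzRingType) (S A B1 B2 c : R) :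
  S * A * (c * B1 + B2) = c * (S * A * B1) + S * A * B2.
Proof. by rewrite mulrDr mulrCA. Qed.

Lemma wedge_ml (R : numFieldType) (V : lmodType R) p q (a : xform R V p)
  (b : xform R V q) : multilinear a -> multilinear b -> multilinear (wedge a b).
Proof.
move=> Ha Hb x i c u w; rewrite /wedge.
set C := ((p`!)%:R^-1 * (q`!)%:R^-1).
rewrite mulrCA -mulrDr; congr (C * _).
rewrite mulr_sumr -big_split /=; apply: eq_bigr => s _.
case: (split_ordP (s^-1 i)%g) => l0 El0.
- have Hi : s (lshift q l0) = i by rewrite -El0 permKV.
  have EA : forall v, (fun l => upd x i v (s (lshift q l))) =
                      upd (fun l => x (s (lshift q l))) l0 v.
    move=> v; apply: functional_extensionality => l; rewrite /upd -Hi.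
    by rewrite (inj_eq perm_inj) eq_lshift.
  have EB : forall v, (fun l => upd x i v (s (rshift p l))) =
                      (fun l => x (s (rshift p l))).
    move=> v; apply: functional_extensionality => l; rewrite /upd -Hi.
    by rewrite (inj_eq perm_inj) eq_rlshift.
  by rewrite !EA !EB Ha mul3_lin.
- have Hi : s (rshift p l0) = i by rewrite -El0 permKV.
  have EA : forall v, (fun l => upd x i v (s (lshift q l))) =
                      (fun l => x (s (lshift q l))).
    move=> v; apply: functional_extensionality => l; rewrite /upd -Hi.
    by rewrite (inj_eq perm_inj) eq_lrshift.
  have EB : forall v, (fun l => upd x i v (s (rshift p l))) =
                      upd (fun l => x (s (rshift p l))) l0 v.
    move=> v; apply: functional_extensionality => l; rewrite /upd -Hi.
    by rewrite (inj_eq perm_inj) eq_rshift.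
  by rewrite !EA !EB Hb mul3_lin'.
Qed.

Lemma pullback_ml (R : nzRingType) (A B : lmodType R) k (f : A -> B)
  (g : xform R B k) : (forall a u w, f (a *: u + w) = a *: f u + f w) ->
  multilinear g -> multilinear (pullback f g).
Proof.
move=> lin Hg x i a u w; rewrite /pullback.
have E : forall v, (fun l => f (upd x i v l)) = upd (fun l => f (x l)) i (f v).
  by move=> v; apply: functional_extensionality => l; rewrite /upd; case: eqP.
by rewrite !E lin Hg.
Qed.

Lemma pullback_alt (R : nzRingType) (A B : Type) k (f : A -> B)
  (g : xform R B k) : alternating g -> alternating (pullback f g).
Proof. by move=> Hg x i j ij xij; rewrite /pullback; apply: (Hg _ i j ij) => /=; rewrite xij. Qed.

Lemma alt_dep (R : fieldType) (V : lmodType R) k (F : xform R V k) m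
  (P : 'I_m -> 'I_k) (c : 'I_m -> R) (x : 'I_k -> V) j0 :
  multilinear F -> alternating F -> injective P ->
  \sum_j c j *: x (P j) = 0 -> c j0 != 0 -> F x = 0.
Proof.
move=> Hm Ha Pi Hs cj0.
have := ml_sum c (fun j => x (P j)) Hm x (P j0).
rewrite Hs ml_zero // (bigD1 j0) //= upd_id big1 ?addr0.
  by move/esym/eqP; rewrite mulf_eq0 (negbTE cj0) /= => /eqP.
move=> j jj0; rewrite (Ha _ (P j0) (P j)) ?mulr0 //.
  by rewrite (inj_eq Pi) eq_sym.
rewrite /upd eqxx; case: eqP => // /Pi E; by rewrite E eqxx in jj0.
Qed.

Lemma wedge_few (R : numFieldType) (W D : lmodType R) a b (A : xform R W a)
  (B : xform R D b) (z : 'I_(a + b) -> (W * D)%type) :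
  multilinear A -> (#|[set m | (z m).1 != 0%R]| < a)%N ->
  wedge (pullback fst A) (pullback snd B) z = 0.
Proof.
move=> HA Hc; rewrite /wedge big1 ?mulr0 // => s _.
suff -> : pullback fst A (fun l => z (s (lshift b l))) = 0 by rewrite mulr0 mul0r.
case: (boolP [forall l, (z (s (lshift b l))).1 != 0]) => [/forallP H | /forallPn [l0 /negPn/eqP H0]].
  exfalso; move: Hc; apply/negP; rewrite -leqNgt.
  have Ec : #|[set s (lshift b l) | l : 'I_a]| = a.
    by rewrite card_imset ?card_ord // => l1 l2 /perm_inj /lshift_inj.
  rewrite -[X in (X <= _)%N]Ec.
  apply: subset_leq_card; apply/subsetP => m /imsetP [l _ ->]; rewrite inE; exact: H.
rewrite /pullback.
have -> : (fun l => (z (s (lshift b l))).1) = upd (fun l => (z (s (lshift b l))).1) l0 0.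
  by apply: functional_extensionality => l; rewrite /upd; case: eqP => // ->.
exact: ml_zero.
Qed.

Definition blk a b (s : 'S_(a + b)) :=
  [forall l, (s (lshift b l) < a)%N] && [forall l, (a <= s (rshift a l))%N].

Definition blockc (R : numFieldType) a b : R :=
  (a`!%:R)^-1 * (b`!%:R)^-1 * (#|[pred s : 'S_(a + b) | blk s]|%:R).

Lemma blockc_neq0 (R : numFieldType) a b : blockc R a b != 0.
Proof.
rewrite /blockc !mulf_neq0 ?invr_eq0 ?pnatr_eq0 -?lt0n ?fact_gt0 //.
apply/card_gt0P; exists 1%g; rewrite inE /blk.
apply/andP; split; apply/forallP => l; rewrite perm1 /= ?ltn_ord //.
exact: leq_addr.
Qed.

Lemma sign_sq (R : nzRingType) (bb : bool) : (-1) ^+ bb * (-1) ^+ bb = 1 :> R.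
Proof. by case: bb; rewrite ?expr0 ?expr1 ?mulr1 ?mulrNN ?mulr1. Qed.

Lemma sign_arr (R : comPzRingType) (x y u v : R) :
  (x * y) * (x * u) * (y * v) = (x * x) * (y * y) * (u * v).
Proof.
rewrite -!mulrA; congr (_ * _); rewrite mulrCA; congr (_ * _).
congr (_ * _); exact: mulrCA.
Qed.

Lemma wedge_block (R : numFieldType) (W D : lmodType R) a b (A : xform R W a)
  (B : xform R D b) (e : 'I_a -> W) (f : 'I_b -> D) (z : 'I_(a + b) -> (W * D)%type) :
  multilinear A -> alternating A -> multilinear B -> alternating B ->
  (forall l, z (lshift b l) = (e l, 0)) -> (forall l, z (rshift a l) = (0, f l)) ->
  wedge (pullback fst A) (pullback snd B) z = blockc R a b * A e * B f.
Proof.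
move=> HmA HaA HmB HaB zl zr; rewrite /wedge /blockc -!mulrA.
congr (_ * (_ * _)).
have z1 : forall m : 'I_(a + b), ~~ (m < a)%N -> (z m).1 = 0.
  move=> m; case: (split_ordP m) => l ->; last by rewrite zr.
  by move=> /negP [].
have z2 : forall m : 'I_(a + b), (m < a)%N -> (z m).2 = 0.
  move=> m; case: (split_ordP m) => l ->; first by rewrite zl.
  by [].
rewrite (bigID (@blk a b)) /= [X in _ + X]big1 ?addr0; last first.
  move=> s; rewrite /blk negb_and => /orP [] /forallPn [l0 Hl0].
    suff -> : pullback fst A (fun l => z (s (lshift b l))) = 0 by rewrite mulr0 mul0r.
    rewrite /pullback.
    have -> : (fun l => (z (s (lshift b l))).1) = upd (fun l => (z (s (lshift b l))).1) l0 0.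
      by apply: functional_extensionality => l; rewrite /upd; case: eqP => // ->; rewrite z1.
    exact: ml_zero.
  suff -> : pullback snd B (fun l => z (s (rshift a l))) = 0 by rewrite mulr0.
  rewrite /pullback.
  have -> : (fun l => (z (s (rshift a l))).2) = upd (fun l => (z (s (rshift a l))).2) l0 0.
    apply: functional_extensionality => l; rewrite /upd; case: eqP => // ->.
    by rewrite z2 // ltnNge.
  exact: ml_zero.
rewrite (eq_bigr (fun _ => A e * B f)); last first.
  move=> s /andP [/forallP H1 /forallP H2].
  have pi_inj : injective (fun l => Ordinal (H1 l)).
    by move=> l1 l2 /(congr1 val) /= /val_inj /perm_inj /lshift_inj.
  pose pi := perm pi_inj.
  have rho_inj : injective (fun l => Ordinal (split_subproof (H2 l))).
    move=> l1 l2 /(congr1 val) /= /(congr1 (addn a)).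
    rewrite !subnKC // => /val_inj /perm_inj /rshift_inj //.
  pose rho := perm rho_inj.
  have sl : forall l, s (lshift b l) = lshift b (pi l).
    by move=> l; apply: val_inj; rewrite /= permE.
  have sr : forall l, s (rshift a l) = rshift a (rho l).
    by move=> l; apply: val_inj; rewrite /= permE /= subnKC.
  have Hsign : (-1) ^+ odd_perm s = (-1) ^+ odd_perm pi * (-1) ^+ odd_perm rho :> R.
    rewrite -!det_perm -(det_ublock _ 0); congr (\det _).
    apply/matrixP => i j.
    case: (split_ordP i) => i' ->; case: (split_ordP j) => j' ->;
      rewrite ?block_mxEul ?block_mxEur ?block_mxEdl ?block_mxEdr /perm_mx !mxE
        ?sl ?sr ?eq_lshift ?eq_rshift ?eq_lrshift ?eq_rlshift //.
  rewrite /pullback.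
  have -> : (fun l => (z (s (lshift b l))).1) = (fun l => e (pi l)).
    by apply: functional_extensionality => l; rewrite sl zl.
  have -> : (fun l => (z (s (rshift a l))).2) = (fun l => f (rho l)).
    by apply: functional_extensionality => l; rewrite sr zr.
  rewrite (alt_perm HmA HaA e pi) (alt_perm HmB HaB f rho) Hsign sign_arr.
  by rewrite !sign_sq !mul1r.
by rewrite sumr_const mulr_natl.
Qed.

Lemma fst_lin (R : nzRingType) (W D : lmodType R) (a : R) (u w : (W * D)%type) :
  (a *: u + w).1 = a *: u.1 + w.1.
Proof. by []. Qed.

Lemma snd_lin (R : nzRingType) (W D : lmodType R) (a : R) (u w : (W * D)%type) :
  (a *: u + w).2 = a *: u.2 + w.2.
Proof. by []. Qed.

Lemma mu_ml (R : numFieldType) (W D : lmodType R) a b (A : xform R W a)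
  (B : xform R D b) : multilinear A -> multilinear B ->
  multilinear (wedge (pullback (@fst W D) A) (pullback (@snd W D) B)).
Proof.
by move=> HA HB; apply: wedge_ml; apply: pullback_ml.
Qed.

Lemma pure_split (R : nzRingType) (W D : lmodType R) (v : (W * D)%type) :
  v = 1 *: (v.1, 0) + (0, v.2).
Proof. by case: v => a b; rewrite scale1r; congr pair; rewrite /= ?addr0 ?add0r. Qed.

Lemma partA (R : realFieldType) (W D : vectType R) q
  (omega : xform R W (\dim {:W}%VS)) (zeta : xform R D q) (alpha : W -> R) :
  multilinear omega -> multilinear zeta ->
  (forall a u w, alpha (a *: u + w) = a * alpha u + alpha w) ->
  form_zero (wedge (fun y : 'I_1 -> (W * D)%type => alpha (y ord0).1)
                   (wedge (pullback fst omega) (pullback snd zeta))).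
Proof.
move=> Hom Hze Hal.
set n := \dim {:W}%VS.
set mu := wedge (pullback fst omega) (pullback snd zeta).
set xi := (fun y : 'I_1 -> (W * D)%type => alpha (y ord0).1).
have al0 : alpha 0 = 0.
  have := Hal 1 0 0; rewrite scale1r addr0 mul1r => H.
  by apply: (@addrI _ (alpha 0)); rewrite addr0 -H.
have Hmu : multilinear mu by apply: mu_ml.
have Amu : alternating mu by apply: wedge_alt.
have Hxi : multilinear xi.
  move=> x i c u w; rewrite /xi /upd (ord1 i) eqxx; exact: Hal.
have HPhi : multilinear (wedge xi mu) by apply: wedge_ml.
have APhi : alternating (wedge xi mu) by apply: wedge_alt.
set k := (1 + (n + q))%N.
set pureb := fun v : (W * D)%type => (v.1 == 0) || (v.2 == 0).
have core : forall x : 'I_k -> (W * D)%type, (forall i, pureb (x i)) -> wedge xi mu x = 0.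
  move=> x Px.
  set P := [set i | (x i).1 != 0].
  case: (leqP n.+1 #|P|) => HP.
    pose p := fun j : 'I_n.+1 => enum_val (widen_ord HP j).
    have p_inj : injective p.
      by move=> j1 j2 /enum_val_inj /(congr1 val) /= /val_inj.
    pose X := [tuple (x (p j)).1 | j < n.+1].
    have nfree : ~~ free X.
      rewrite /free size_tuple; apply/negP => /eqP E.
      have : (\dim <<X>> <= n)%N by apply: dimvS; exact: subvf.
      by rewrite E ltnn.
    have [c [Hc [j0 Hj0]]] : exists c : 'I_n.+1 -> R,
        \sum_(i < n.+1) c i *: X`_i = 0 /\ exists j0, c j0 != 0.
      apply: NNPP => H; move/freeP: nfree; apply => c Hc i.
      apply: NNPP => Hci; apply: H; exists c; split => //; exists i; exact/eqP.
    apply: (alt_dep (P := p) (c := c) (j0 := j0)) => //.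
    have Xe : forall j : 'I_n.+1, X`_j = (x (p j)).1 by move=> j; rewrite nth_mktuple.
    have xpe : forall j, x (p j) = ((x (p j)).1, 0).
      move=> j; have : p j \in P by exact: enum_valP.
      rewrite inE => H1; have := Px (p j); rewrite /pureb (negbTE H1) /= => /eqP H2.
      by case: (x (p j)) H2 => u w /= ->.
    have E1 : (\sum_j c j *: x (p j)).1 = \sum_j c j *: X`_j.
      rewrite (big_morph fst (fun u v => erefl (u + v).1) (erefl (0 : (W * D)%type).1)).
      by apply: eq_bigr => j _; rewrite Xe.
    have E2 : (\sum_j c j *: x (p j)).2 = 0.
      rewrite (big_morph snd (fun u v => erefl (u + v).2) (erefl (0 : (W * D)%type).2)).
      by apply: big1 => j _; rewrite xpe /= scaler0.
    move: E1 E2; rewrite Hc; case: (\sum_j c j *: x (p j)) => u w /= -> -> //.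
  rewrite wedge1E //; apply: big1 => i _.
  case: (boolP ((x i).1 == 0)) => [/eqP H0 | H0].
    by rewrite /xi H0 al0 mulr0 mul0r.
  rewrite [mu _](@wedge_few R W D n q) ?mulr0 //.
  have Hi : i \in P by rewrite inE.
  have Ecard : #|[set m | (x (lift i m)).1 != 0%R]| = #|lift i @: [set m | (x (lift i m)).1 != 0%R]|.
    by rewrite card_imset //; exact: lift_inj.
  rewrite Ecard.
  have : lift i @: [set m | (x (lift i m)).1 != 0%R] \subset P :\ i.
    apply/subsetP => m /imsetP [l]; rewrite !inE => Hl ->; rewrite Hl andbT.
    by rewrite eq_sym neq_lift.
  move/subset_leq_card; rewrite (cardsD1 i P) Hi in HP.
  move=> H; apply: (leq_ltn_trans H); by rewrite -ltnS.
(* reduction to pure vectors *)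
suff gen : forall m (x : 'I_k -> (W * D)%type),
    (forall i : 'I_k, (m <= i)%N -> pureb (x i)) -> wedge xi mu x = 0.
  by move=> x; apply: (gen k) => i; rewrite leqNgt ltn_ord.
elim=> [|m IH] x Hx; first by apply: core => i; apply: Hx.
case: (ltnP m k) => Hm; last first.
  by apply: IH => i Hi; exfalso; move: (ltn_ord i); rewrite ltnNge (leq_trans Hm Hi).
pose i0 : 'I_k := Ordinal Hm.
have H1 : wedge xi mu (upd x i0 ((x i0).1, 0)) = 0.
  apply: IH => i Hi; rewrite /upd; case: eqP => [_|/eqP ii0]; first by rewrite /pureb /= eqxx orbT.
  apply: Hx; rewrite ltn_neqAle Hi andbT; apply: contra ii0 => /eqP E.
  by apply/eqP; apply: val_inj.
have H2 : wedge xi mu (upd x i0 (0, (x i0).2)) = 0.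
  apply: IH => i Hi; rewrite /upd; case: eqP => [_|/eqP ii0]; first by rewrite /pureb /= eqxx.
  apply: Hx; rewrite ltn_neqAle Hi andbT; apply: contra ii0 => /eqP E.
  by apply/eqP; apply: val_inj.
by rewrite -(upd_id x i0) [x i0]pure_split HPhi H1 H2 mulr0 addr0.
Qed.

Lemma arr4 (R : comPzRingType) (s t b c o z : R) :
  (s * t) * b * (c * o * z) = (s * c * o) * (t * b * z).
Proof. ring. Qed.

Lemma card_ltn N r : (#|[set m : 'I_N | (m < r)%N]| <= r)%N.
Proof.
rewrite cardE -(size_map val); apply: (@leq_trans (size (iota 0 r))); last by rewrite size_iota.
apply: uniq_leq_size; first by rewrite (map_inj_uniq val_inj) enum_uniq.
by move=> v /mapP [m]; rewrite mem_enum inE => Hm ->; rewrite mem_iota.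
Qed.

Lemma aux1 a b c : (a < c)%N -> (a <= b)%N -> (1 + b < c)%N -> (b < c.-1)%N.
Proof. lia. Qed.

Lemma aux2 a b c : (a < c)%N -> (b < a)%N -> (0 + b < c)%N -> (b < c.-1)%N.
Proof. lia. Qed.

Lemma big_cast (R : nmodType) N M (E : M = N) (F : 'I_N -> R) :
  \sum_(i < N) F i = \sum_(i < M) F (cast_ord E i).
Proof. by subst; apply: eq_bigr => i _; rewrite cast_ord_id. Qed.

Lemma partB (R : realFieldType) (W D : vectType R) q
  (omega : xform R W (\dim {:W}%VS)) (zeta : xform R D q)
  (xi : xform R (W * D)%type 1) (e : 'I_(\dim {:W}%VS) -> W) :
  multilinear omega -> alternating omega -> multilinear zeta -> alternating zeta ->
  omega e != 0 ->
  form_zero (wedge xi (wedge (pullback fst omega) (pullback snd zeta))) ->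
  form_zero (wedge (fun y : 'I_1 -> D => xi (fun _ => (0, y ord0))) zeta).
Proof.
move=> Hom Aom Hze Aze He HPhi y.
set n := \dim {:W}%VS.
set mu := wedge (pullback fst omega) (pullback snd zeta).
have Hmu : multilinear mu by apply: mu_ml.
have Amu : alternating mu by apply: wedge_alt.
pose ee (k : nat) : W := if @insub _ (fun k => (k < n)%N) 'I_n k is Some a then e a else 0.
pose yy (k : nat) : D := if @insub _ (fun k => (k < q.+1)%N) 'I_q.+1 k is Some b then y b else 0.
have eeE : forall a : 'I_n, ee a = e a.
  by move=> a; rewrite /ee valK.
have yyE : forall b : 'I_q.+1, yy b = y b.
  by move=> b; rewrite /yy valK.
pose x (i : 'I_(1 + (n + q))) : (W * D)%type :=
  if (i < n)%N then (ee i, 0) else (0, yy (i - n)%N).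
have H := HPhi x.
rewrite wedge1E // (big_cast (addnS n q)) big_split_ord /= in H.
rewrite big1 ?add0r in H; last first.
  move=> i _; rewrite (@wedge_few R W D n q omega zeta) ?mulr0 //.
  have lt : (n.-1 < n)%N by rewrite prednK ?leqnn //; apply: leq_ltn_trans (ltn_ord i).
  apply: leq_ltn_trans lt; apply: leq_trans (card_ltn (n + q) n.-1).
  apply: subset_leq_card; apply/subsetP => m; rewrite !inE /x.
  case: ifP => Hl; last by rewrite eqxx.
  move=> _; move: Hl; rewrite /= /bump.
  case: (leqP i m) => Hm /=; [exact: aux1 (ltn_ord i) Hm | exact: aux2 (ltn_ord i) Hm].
rewrite wedge1E //.
apply/eqP; move/eqP: H; apply: contraTT => Hne.
rewrite (eq_bigr (fun j : 'I_q.+1 => ((-1) ^+ n * blockc R n q * omega e) *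
   ((-1) ^+ j * xi (fun _ => (0, y j)) * zeta (fun m => y (lift j m))))); last first.
  move=> j _.
  set i := cast_ord _ _.
  have vi : nat_of_ord i = (n + j)%N by [].
  have xi_eq : (fun _ : 'I_1 => x i) = (fun _ => (0, y j)).
    apply: functional_extensionality => _.
    by rewrite /x vi ltnNge leq_addr /= addKn yyE.
  rewrite xi_eq.
  rewrite (@wedge_block R W D n q omega zeta e (fun m => y (lift j m))) //.
  - by rewrite exprD arr4.
  - move=> l; rewrite /x /= /bump.
    have -> : (n + j <= l)%N = false by apply/negbTE; rewrite -ltnNge; apply: leq_trans (ltn_ord l) (leq_addr _ _).
    by rewrite add0n ltn_ord eeE.
  - move=> l; rewrite /x /= /bump leq_add2l.
    rewrite addnCA ltnNge leq_addr /= addKn.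
    have -> : ((j <= l) + l)%N = lift j l by rewrite /= /bump.
    by rewrite yyE.
rewrite -mulr_sumr; apply: mulf_neq0 => //; apply: mulf_neq0 => //; apply: mulf_neq0; [by rewrite signr_eq0 | exact: blockc_neq0].
Qed.

Lemma const1_upd (V : Type) (g : V) (z0 : 'I_1 -> V) : (fun _ : 'I_1 => g) = upd z0 ord0 g.
Proof. by apply: functional_extensionality => i; rewrite /upd (ord1 i) eqxx. Qed.

Lemma alt1 (R : nzRingType) (V : Type) (f : xform R V 1) : alternating f.
Proof. by move=> x i j; rewrite (ord1 i) (ord1 j) eqxx. Qed.

Lemma pair_lin (R : nzRingType) (W D : lmodType R) (c : R) (u w : D) :
  ((0 : W), c *: u + w) = c *: ((0 : W), u) + (0, w) :> (W * D)%type.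
Proof.
move: (fst_lin c ((0 : W), u) (0, w)) (snd_lin c ((0 : W), u) (0, w)).
case: (c *: ((0 : W), u) + (0, w)) => a b /= -> ->.
by rewrite scaler0 addr0.
Qed.

Theorem lemma3p6 (R : realFieldType) (W D : vectType R) (q : nat)
    (omega : xform R W (\dim {:W}%VS)) (zeta : xform R D q) :
  volume_form omega -> is_form zeta -> indivisible zeta ->
  forall v : (W * D)%type,
    divspace (wedge (pullback fst omega) (pullback snd zeta)) v <-> v.1 = 0.
Proof.
move=> [[Hom Aom] nz] [Hze Aze] Hind v; split.
- move=> Hdiv; apply: NNPP => Hv1.
  have [i0 Hi0] : exists i0, coord (vbasis {:W}%VS) i0 v.1 != 0.
    apply: NNPP => H; apply: Hv1.
    rewrite (coord_vbasis (memvf v.1)) big1 // => i _.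
    have : ~ (coord (vbasis {:W}%VS) i v.1 != 0) by move=> Hc; apply: H; exists i.
    by move/negP; rewrite negbK => /eqP ->; rewrite scale0r.
  pose alpha := fun w : W => coord (vbasis {:W}%VS) i0 w.
  have Hal : forall a u w, alpha (a *: u + w) = a * alpha u + alpha w.
    by move=> a u w; rewrite /alpha linearD linearZ.
  pose xi := fun y : 'I_1 -> (W * D)%type => alpha (y ord0).1.
  have Hxi : is_form xi.
    split; last exact: alt1.
    move=> x i c u w; rewrite /xi /upd (ord1 i) eqxx; exact: Hal.
  have := Hdiv xi Hxi (partA Hom Hze Hal).
  by rewrite /eval1 /xi /= => /eqP; rewrite (negbTE Hi0).
- move=> Hv1 xi [Hxi Axi] Hz.
  have [e He] : exists e, omega e != 0.
    apply: NNPP => H; apply: nz => e; apply/eqP; apply: NNPP => H'; apply: H; exists e; exact/negP.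
  pose beta := pullback (fun d : D => ((0 : W), d)) xi.
  have Hbeta : is_form beta.
    split; last exact: alt1.
    apply: pullback_ml => // a u w; exact: pair_lin.
  have Eb : beta = (fun y : 'I_1 -> D => xi (fun _ => (0, y ord0))).
    apply: functional_extensionality => y; rewrite /beta /pullback; congr xi.
    by apply: functional_extensionality => i; rewrite (ord1 i).
  have Hb0 := partB Hom Aom Hze Aze He Hz.
  rewrite -Eb in Hb0.
  have := Hind v.2 beta Hbeta Hb0.
  rewrite /eval1 /beta /pullback; case: v Hv1 => a b /= ->; by [].
Qed.
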